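(* Let $R$ be a pmp equivalence relation and $F\subseteq\llbracket R\rrbracket$ finite. Then $s(F)=\lim_{\varepsilon\to0}s_\varepsilon(F)$, and likewise $\underline s(F)=\lim_{\varepsilon\to0}\underline s_\varepsilon(F)$ and $s_\omega(F)=\lim_{\varepsilon\to0}s_{\omega,\varepsilon}(F)$ for every nonprincipal ultrafilter $\omega$.
   Context: Let $(X,\mu)$ be a standard probability space and $R$ a pmp countable Borel equivalence relation. $\llbracket R\rrbracket$ denotes the set of partial measure-preserving Borel bijections between Borel subsets of $X$ with graph contained in $R$, modulo null sets, with composition, inverses and identity $1$. Pairwise orthogonal elements (pairwise disjoint domains and ranges) have a sum; $\mathbf\Sigma F$ is the set of finite sums of pairwise orthogonal elements of $F$; $F_\pm=F\cup\{s^{-1}:s\in F\}\cup\{1\}$; $F_\pm^n$ the products of $n$ elements of $F_\pm$. $|s-t|=\mu\{x\in\operatorname{dom}s\cup\operatorname{dom}t:s(x)\neq t(x)\}$ (with $s(x)\neq t(x)$ on $\operatorname{dom}s\triangle\operatorname{dom}t$), $\tau(s)=\mu\{x\in\operatorname{dom}s:s(x)=x\}$. $\llbracket d\rrbracket$: partial permutations of $\{1,\dots,d\}$ with uniform measure, same distance, trace $\operatorname{tr}$. ${\rm SA}(F,n,\delta,d)$ is the set of maps $\varphi:\llbracket R\rrbracket\to\llbracket d\rrbracket$ with $\varphi(1)=1$ such that $|\varphi(st)-\varphi(s)\varphi(t)|<\delta$ for all $s,t\in\mathbf\Sigma F_\pm^n$ with $st\in\mathbf\Sigma F_\pm^n$,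 and $|\operatorname{tr}(\varphi(s))-\tau(s)|<\delta$ for all $s\in\mathbf\Sigma F_\pm^n$. For maps $\varphi,\psi$ put $|\varphi-\psi|_F=\max_{s\in F}|\varphi(s)-\psi(s)|$, and for $\varepsilon\ge0$ let $N_\varepsilon(S)$ be the minimal number of closed $|\cdot|_F$-balls of radius $\varepsilon$ covering a set $S$ of maps. Define $s_\varepsilon(F)=\inf_n\inf_{\delta>0}\limsup_{d\to\infty}\frac{1}{d\log d}\log N_\varepsilon({\rm SA}(F,n,\delta,d))$ ($\log0=-\infty$); $\underline s_\varepsilon(F)$ uses $\liminf_d$, $s_{\omega,\varepsilon}(F)$ uses $\lim_{d\to\omega}$; $s(F),\underline s(F),s_\omega(F)$ are the case $\varepsilon=0$ (where $N_0$ counts distinct restrictions to $F$). *)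

(* Defs.v *)
From HB Require Import structures.
From mathcomp Require Import all_boot all_order all_algebra.
From mathcomp Require Import all_classical all_reals all_analysis.

Set Implicit Arguments.
Unset Strict Implicit.
Unset Printing Implicit Defensive.

Import Order.TTheory GRing.Theory Num.Theory.
Import numFieldNormedType.Exports.
Local Open Scope classical_set_scope.
Local Open Scope ring_scope.

(* Standard Borel spaces: (by Kuratowski's theorem) measurable spaces that    *)
(* are Borel isomorphic to a Borel subset of the real line.                  *)
Definition std_borel (R : realType) (d : measure_display)
    (T : measurableType d) : Prop :=
  exists (A : set R) (f : T -> R),
    measurable A /\ measurable_fun setT f /\
    set_inj setT f /\ f @` setT = A /\
    (forall B : set T, measurable B -> measurable (f @` B)).

Definition cber (d : measure_display) (T : measurableType d)
    (E : T -> T -> Prop) : Prop :=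
  [/\ (forall x, E x x), (forall x y, E x y -> E y x),
      (forall x y z, E x y -> E y z -> E x z),
      measurable [set p : T * T | E p.1 p.2] &
      (forall x, countable [set y | E x y])].

Definition parmap (T : Type) := (set T * (T -> T))%type.
Definition pdom T (s : parmap T) : set T := s.1.
Definition pfun T (s : parmap T) : T -> T := s.2.
Definition pran T (s : parmap T) : set T := pfun s @` pdom s.

Definition borel_pbij (d : measure_display) (T : measurableType d)
    (E : T -> T -> Prop) (s : parmap T) : Prop :=
  [/\ measurable (pdom s), measurable_fun (pdom s) (pfun s),
      set_inj (pdom s) (pfun s),
      (forall B, measurable B -> B `<=` pdom s -> measurable (pfun s @` B)) &
      (forall x, pdom s x -> E x (pfun s x))].

Definition pmp (R : realType) (d : measure_display) (T : measurableType d)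
    (mu : probability T R) (E : T -> T -> Prop) : Prop :=
  forall s, borel_pbij E s -> mu (pran s) = mu (pdom s).

Definition in_pgrp (R : realType) (d : measure_display) (T : measurableType d)
    (mu : probability T R) (E : T -> T -> Prop) (s : parmap T) : Prop :=
  borel_pbij E s /\
  (forall B, measurable B -> B `<=` pdom s -> mu (pfun s @` B) = mu B).

Section Pseudogroup.
Variables (R : realType) (d : measure_display) (T : measurableType d).
Variable mu : probability T R.

Definition pone : parmap T := (setT, id).
Arguments pone : clear implicits.
Definition pcomp (s t : parmap T) : parmap T :=
  ([set x | pdom t x /\ pdom s (pfun t x)], pfun s \o pfun t).
Definition pinvf (s : parmap T) : T -> T := fun y =>
  match pselect (exists x, pdom s x /\ pfun s x = y) with
  | left e => projT1 (cid e)
  | right _ => y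
  end.
Definition pinverse (s : parmap T) : parmap T := (pran s, pinvf s).
Definition psum2 (s t : parmap T) : parmap T :=
  (pdom s `|` pdom t,
   fun x => if x \in pdom s then pfun s x else pfun t x).
Definition pzero : parmap T := (set0, id).
Definition psum (l : seq (parmap T)) : parmap T := foldr psum2 pzero l.
Definition pprod (l : seq (parmap T)) : parmap T := foldr pcomp pone l.

Definition pdist (s t : parmap T) : \bar R :=
  mu [set x | (pdom s x \/ pdom t x) /\
              ~ (pdom s x /\ pdom t x /\ pfun s x = pfun t x)].
Definition ptau (s : parmap T) : \bar R :=
  mu [set x | pdom s x /\ pfun s x = x].

Definition pequiv (s t : parmap T) : Prop := pdist s t = 0%E.

Definition porth (s t : parmap T) : Prop :=
  mu (pdom s `&` pdom t) = 0%E /\ mu (pran s `&` pran t) = 0%E.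

Definition pairwise_orth (l : seq (parmap T)) : Prop :=
  forall i j, (i < size l)%N -> (j < size l)%N -> i <> j ->
    porth (nth pzero l i) (nth pzero l j).

Definition in_Fpm (F : seq (parmap T)) (x : parmap T) : Prop :=
  pequiv x pone \/ exists2 s, s \in F & (pequiv x s \/ pequiv x (pinverse s)).

Definition in_Fpow (F : seq (parmap T)) (n : nat) (x : parmap T) : Prop :=
  exists l : seq (parmap T), size l = n /\ (forall y, y \in l -> in_Fpm F y) /\
    pequiv x (pprod l).

Definition in_SigFpow (E : T -> T -> Prop) (F : seq (parmap T)) (n : nat)
    (x : parmap T) : Prop :=
  in_pgrp mu E x /\
  exists l : seq (parmap T),
    (forall y, y \in l -> in_pgrp mu E y /\ in_Fpow F n y) /\
    pairwise_orth l /\ pequiv x (psum l).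
End Pseudogroup.

(* Partial permutations of {0,...,d-1} (i.e. of {1,...,d}).                 *)
Definition ppd (n : nat) := {ffun 'I_n -> option 'I_n}.
Definition ppd_inj n (p : ppd n) : bool :=
  [forall i, forall j, (p i != None) && (p i == p j) ==> (i == j)].
Definition ppd_one n : ppd n := [ffun i => Some i].
Definition ppd_comp n (p q : ppd n) : ppd n :=
  [ffun i => if q i is Some j then p j else None].
Definition ppd_dist (R : realType) n (p q : ppd n) : R :=
  #|[set i | p i != q i]|%:R / n%:R.
Definition ppd_tr (R : realType) n (p : ppd n) : R :=
  #|[set i | p i == Some i]|%:R / n%:R.

Section SoficEntropy.
Variables (R : realType) (dd : measure_display) (T : measurableType dd).
Variables (mu : probability T R) (E : T -> T -> Prop).

Definition smap (n : nat) := parmap T -> ppd n.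

(* maps [[E]] -> [[n]]: well defined on classes modulo null sets *)
Definition is_smap n (phi : smap n) : Prop :=
  (forall s, ppd_inj (phi s)) /\
  (forall s t, in_pgrp mu E s -> in_pgrp mu E t -> pequiv mu s t ->
     phi s = phi t).

Definition distF (F : seq (parmap T)) n (phi psi : smap n) : R :=
  \big[Num.max/0]_(s <- F) ppd_dist R (phi s) (psi s).

Definition SA (F : seq (parmap T)) (m : nat) (delta : R) (n : nat)
    : set (smap n) :=
  [set phi | is_smap phi /\ phi (@pone _ T) = ppd_one n /\
    (forall s t, in_SigFpow mu E F m s -> in_SigFpow mu E F m t ->
       in_SigFpow mu E F m (pcomp s t) ->
       ppd_dist R (phi (pcomp s t)) (ppd_comp (phi s) (phi t)) < delta) /\
    (forall s, in_SigFpow mu E F m s ->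
       (`| (ppd_tr R (phi s))%:E - ptau mu s | < delta%:E)%E)].

Definition covers (F : seq (parmap T)) n (S : set (smap n)) (eps : R)
    (k : nat) : Prop :=
  exists c : seq (smap n), size c = k /\ (forall psi, psi \in c -> is_smap psi) /\
    forall phi, S phi -> exists2 psi, psi \in c & distF F phi psi <= eps.

Definition Ncov (F : seq (parmap T)) n (S : set (smap n)) (eps : R) : \bar R :=
  ereal_inf [set (k%:R)%:E | k in [set k | covers F S eps k]].

Definition elog (x : \bar R) : \bar R :=
  match x with
  | r%:E => if r == 0 then -oo%E else (ln r)%:E
  | _ => x
  end.

Definition sterm (F : seq (parmap T)) (m : nat) (delta eps : R) (n : nat)
    : \bar R :=
  ((n%:R * ln (n%:R : R))^-1)%:E * elog (Ncov F (@SA F m delta n) eps).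

Definition s_eps (F : seq (parmap T)) (eps : R) : \bar R :=
  ereal_inf [set ereal_inf [set limn_esup (sterm F m delta eps)
                           | delta in [set delta : R | 0 < delta]]
            | m in [set: nat]].
Definition lower_s_eps (F : seq (parmap T)) (eps : R) : \bar R :=
  ereal_inf [set ereal_inf [set limn_einf (sterm F m delta eps)
                           | delta in [set delta : R | 0 < delta]]
            | m in [set: nat]].
Definition s_omega_eps (om : set_system nat) (F : seq (parmap T)) (eps : R)
    : \bar R :=
  ereal_inf [set ereal_inf [set lim (sterm F m delta eps @ om)
                           | delta in [set delta : R | 0 < delta]]
            | m in [set: nat]].

Definition s_ent F := s_eps F 0.
Definition lower_s_ent F := lower_s_eps F 0.
Definition s_omega_ent om F := s_omega_eps om F 0.
End SoficEntropy.

Definition nonprincipal (om : set_system nat) : Prop :=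
  forall k : nat, ~ om [set k].

(* Main.v *)
Require Import Defs.
From HB Require Import structures.
From mathcomp Require Import all_boot all_order all_algebra.
From mathcomp Require Import all_classical all_reals all_analysis.
From mathcomp Require Import ring lra.
From mathcomp Require Import zify.
From Stdlib Require Import Lia.
Import Order.TTheory GRing.Theory Num.Theory.
Import numFieldNormedType.Exports.
Local Open Scope classical_set_scope.
Local Open Scope ring_scope.
Set Implicit Arguments.
Unset Strict Implicit.
Unset Printing Implicit Defensive.

Section Generic.
Variable R : realType.
Local Open Scope ereal_scope.

Lemma inf_shift (I : Type) (P : set I) (a b : I -> \bar R) (c : R) :
  (forall i, a i <= b i) -> (forall i, b i <= a i + c%:E) ->
  ereal_inf [set a i | i in P] <= ereal_inf [set b i | i in P] /\
  ereal_inf [set b i | i in P] <= ereal_inf [set a i | i in P] + c%:E.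
Proof.
move=> ab ba; split.
  apply: le_ereal_inf_tmp => _ [i Pi <-].
  apply: le_trans _ (ab i); apply: ereal_inf_lbound; by exists i.
rewrite -leeBlDr //; apply: le_ereal_inf_tmp => _ [i Pi <-].
rewrite leeBlDr //; apply: le_trans _ (ba i).
apply: ereal_inf_lbound; by exists i.
Qed.

Lemma limsup_shift (u v : nat -> \bar R) (c : R) :
  (forall n, u n <= v n) -> (forall n, v n <= u n + c%:E) ->
  limn_esup u <= limn_esup v /\ limn_esup v <= limn_esup u + c%:E.
Proof.
move=> uv vu.
have mono : forall a b : nat -> \bar R, (forall n, a n <= b n) ->
    limn_esup a <= limn_esup b.
  move=> a b ab; rewrite !limn_esup_lim; apply: lee_lim.
  - exact: is_cvg_esups.
  - exact: is_cvg_esups.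
  apply: nearW => n; apply: ge_ereal_sup => _ [k /= nk <-].
  apply: le_trans (ab k) _; apply: ereal_sup_ubound; by exists k.
split; first exact: mono.
apply: le_trans (mono _ (fun n => u n + c%:E) vu) _.
have -> : limn_esup (fun n => u n + c%:E) = - limn_einf (fun n => (- c)%:E + (- u n)).
  rewrite /limn_einf oppeK; congr limn_esup; apply: funext => n /=.
  by rewrite oppeD // EFinN !oppeK addeC.
rewrite limn_einf_shift //.
have -> : (fun n => - u n) = (-%E \o u) by [].
rewrite limn_einfN oppeD // EFinN !oppeK addeC //.
Qed.

Lemma liminf_shift (u v : nat -> \bar R) (c : R) :
  (forall n, u n <= v n) -> (forall n, v n <= u n + c%:E) ->
  limn_einf u <= limn_einf v /\ limn_einf v <= limn_einf u + c%:E.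
Proof.
move=> uv vu.
have mono : forall a b : nat -> \bar R, (forall n, a n <= b n) ->
    limn_einf a <= limn_einf b.
  move=> a b ab; rewrite !limn_einf_lim; apply: lee_lim.
  - exact: is_cvg_einfs.
  - exact: is_cvg_einfs.
  apply: nearW => n; apply: le_ereal_inf_tmp => _ [k /= nk <-].
  apply: le_trans _ (ab k); apply: ereal_inf_lbound; by exists k.
split; first exact: mono.
apply: le_trans (mono _ (fun n => c%:E + u n) _) _.
  by move=> n; rewrite addeC.
by rewrite limn_einf_shift // addeC.
Qed.

Lemma ultra_cvg (om : set_system nat) (U : UltraFilter om) (f : nat -> \bar R) :
  cvg (f @ om).
Proof.
set l := ereal_inf [set ereal_sup (f @` A) | A in om].
have i1 : forall A, om A -> l <= ereal_sup (f @` A).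
  by move=> A oA; apply: ereal_inf_lbound; exists A.
have i2 : forall x, l < x -> om [set n | f n < x].
  move=> x /ereal_inf_lt [_ [A oA <-]] sx.
  apply: filterS oA => n An /=; apply: le_lt_trans sx.
  by apply: ereal_sup_ubound; exists n.
have i3 : forall x, x < l -> om [set n | x < f n].
  move=> x xl; case: (in_ultra_setVsetC [set n | x < f n] U) => // oc.
  exfalso; have := i1 _ oc.
  have : ereal_sup (f @` (~` [set n | x < f n])) <= x.
    apply: ge_ereal_sup => _ [n /= nx <-]; by rewrite leNgt; apply/negP.
  move=> h1 h2; have := le_trans h2 h1; by rewrite leNgt xl.
have finb : forall (a b : R) y, a%:E < y -> y < b%:E -> y \is a fin_num.
  by move=> a b [y| |].
apply/cvg_ex; exists l.
move: i1 i2 i3; case: l => [r| |] i1 i2 i3.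
- apply/fine_cvgP; split.
    apply: filterS (filterI (i2 (r + 1)%:E _) (i3 (r - 1)%:E _)).
    + by move=> n [/= h1 h2]; exact: finb h2 h1.
    + by rewrite lte_fin ltrDl.
    + by rewrite lte_fin ltrBlDr ltrDl.
  apply/cvgrPdist_lt => e e0.
  apply: filterS (filterI (i2 (r + e)%:E _) (i3 (r - e)%:E _)); last 2 first.
    + by rewrite lte_fin ltrDl.
    + by rewrite lte_fin ltrBlDr ltrDl.
  move=> n [/= h1 h2].
  have : f n \is a fin_num by exact: finb h2 h1.
  move: h1 h2; case: (f n) => // s h1 h2 _ /=.
  rewrite lte_fin in h1; rewrite lte_fin in h2.
  rewrite ltr_norml; apply/andP; split; lra.
- by apply/cvgeyPgt => A; apply: i3; rewrite ltry.
- by apply/cvgeNyPle => A; apply: filterS (i2 A%:E (ltNyr A)) => n /= /ltW.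
Qed.

Lemma ultra_shift (om : set_system nat) (U : UltraFilter om) (u v : nat -> \bar R) (c : R) :
  (forall n, u n <= v n) -> (forall n, v n <= u n + c%:E) ->
  lim (u @ om) <= lim (v @ om) /\ lim (v @ om) <= lim (u @ om) + c%:E.
Proof.
move=> uv vu; split.
  apply: lee_lim; [exact: ultra_cvg | exact: ultra_cvg | exact: nearW].
have cu : (fun n => u n + c%:E) @ om --> lim (u @ om) + c%:E.
  apply: cvgeD; [by rewrite fin_num_adde_defl | exact: ultra_cvg | exact: cvg_cst].
rewrite -(cvg_lim _ cu) //.
apply: lee_lim; [exact: ultra_cvg | by apply/cvg_ex; eexists; exact: cu | exact: nearW].
Qed.

Lemma sandwich_cvg (G : R -> \bar R) (g0 : \bar R) (C : R) : (0 <= C)%R ->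
  (forall eps : R, (0 < eps)%R -> G eps <= g0 /\ g0 <= G eps + (C * eps)%:E) ->
  G eps @[eps --> 0%R^'+] --> g0.
Proof.
move=> C0 H.
have pos := @nbhs_right_gt R 0.
move: H; case: g0 => [r| |] H.
- apply/fine_cvgP; split.
    apply: filterS pos => x /H [h1 h2].
    move: h1 h2; by case: (G x).
  apply/cvgrPdist_lt => e e0.
  have ec : (0 < e / (C + 1))%R by apply: divr_gt0 => //; lra.
  apply: filterS (filterI pos (nbhs_right_lt ec)) => x [x0 xe].
  have [h1 h2] := H x x0.
  rewrite /=; move: h1 h2; case: (G x) => // s h1 h2 /=.
  rewrite lee_fin in h1; rewrite -EFinD lee_fin in h2.
  have h3 : (C * x <= C * (e / (C + 1)))%R by apply: ler_wpM2l => //; exact: ltW.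
  have h4 : (C * (e / (C + 1)) < e)%R.
    rewrite mulrA ltr_pdivrMr; last lra.
    nra.
  rewrite ger0_norm; last lra.
  lra.
- apply/cvgeyPgt => A; apply: filterS pos => x /H [_].
  case: (G x) => [s|_|//]; [by rewrite leye_eq //= | by rewrite ltry].
- apply/cvgeNyPle => A; apply: filterS pos => x /H [h _].
  move: h; case: (G x) => [s|//|_]; [by rewrite leeNy_eq | by rewrite leNye].
Qed.

End Generic.

Section Enc.
Variable R : realType.

Definition dset n (q p : ppd n) : {set 'I_n} := [set i | q i != p i].

Lemma card_cl n (q p : ppd n) :
  #|[set i | q i != p i] : set 'I_n| = #|dset q p|.
Proof. apply: eq_card => i; rewrite !inE /=; apply/idP/idP => [/set_mem //|h]; exact: mem_set. Qed.

Lemma ppd_dist_card n (q p : ppd n) (eps : R) : ppd_dist R q p <= eps ->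
  (#|dset q p| <= Num.truncn (eps * n%:R))%N.
Proof.
rewrite /ppd_dist card_cl => h.
case: n q p h => [|n] q p h.
  suff -> : #|dset q p| = 0%N by []; by apply/eqP; rewrite cards_eq0; apply/eqP/setP => -[].
have n0 : (0 < n.+1%:R :> R) by rewrite ltr0n.
have e0 : 0 <= eps by apply: le_trans h; apply: divr_ge0; rewrite ler0n.
rewrite ler_pdivrMr // in h.
rewrite truncn_ge_nat; last by rewrite mulr_ge0 // ler0n.
exact: h.
Qed.

Definition enc n L (p q : ppd n) : {ffun 'I_L -> option ('I_n * option 'I_n)} :=
  [ffun j : 'I_L => nth None [seq Some (i, q i) | i <- enum (dset q p)] j].

Lemma nth_some_mem (X : eqType) (s : seq (option X)) j x :
  nth None s j = Some x -> Some x \in s.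
Proof.
case: (ltnP j (size s)) => h; first by move <-; exact: mem_nth.
by rewrite nth_default.
Qed.

Lemma enc_inj n L (p : ppd n) :
  {in [pred q | (#|dset q p| <= L)%N] &, injective (enc L p)}.
Proof.
move=> q1 q2; rewrite !inE => h1 h2 e.
have key : forall (qa qb : ppd n), (#|dset qa p| <= L)%N -> enc L p qa = enc L p qb ->
    forall i, qa i != p i -> qb i = qa i.
  move=> qa qb ha eab i ni.
  set sa := [seq Some (i, qa i) | i <- enum (dset qa p)].
  set sb := [seq Some (i, qb i) | i <- enum (dset qb p)].
  have mi : Some (i, qa i) \in sa by apply: map_f; rewrite mem_enum inE.
  have szl : (index (Some (i, qa i)) sa < L)%N.
    apply: leq_trans ha; rewrite cardE -(size_map (fun i => Some (i, qa i))).
    by rewrite index_mem.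
  have := congr1 (fun f : {ffun _ -> _} => f (Ordinal szl)) eab; rewrite /enc !ffunE /= -/sa -/sb.
  rewrite nth_index // => /esym /nth_some_mem /mapP [i' _ [-> ->]] //.
move=> /= in h1 h2.
apply/ffunP => i.
case: (eqVneq (q1 i) (p i)) => e1.
  case: (eqVneq (q2 i) (p i)) => e2; first by rewrite e1 e2.
  by rewrite (key q2 q1 h2 (esym e) i e2).
by rewrite (key q1 q2 h1 e i e1).
Qed.

Lemma card_B n L k (ps : 'I_k -> ppd n) (B : {set {ffun 'I_k -> ppd n}}) :
  (forall t, t \in B -> forall i, (#|dset (t i) (ps i)| <= L)%N) ->
  (#|B| <= ((n * n.+1).+1 ^ L) ^ k)%N.
Proof.
move=> hB.
pose g (t : {ffun 'I_k -> ppd n}) : {ffun 'I_k -> {ffun 'I_L -> option ('I_n * option 'I_n)}} :=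
  [ffun i => enc L (ps i) (t i)].
have : (#|B| <= #|{ffun 'I_k -> {ffun 'I_L -> option ('I_n * option 'I_n)}}|)%N.
  apply: (@leq_card_in _ _ g) => t1 t2 h1 h2 e.
  apply/ffunP => i.
  have := congr1 (fun f : {ffun _ -> _} => f i) e; rewrite /g !ffunE.
  by apply: enc_inj; rewrite inE; apply: hB.
by rewrite !card_ffun card_option card_prod !card_ord card_option card_ord.
Qed.

End Enc.


Section Comb.
Variables (R : realType) (dd : measure_display) (T : measurableType dd).
Variables (mu : probability T R) (E : T -> T -> Prop) (F : seq (parmap T)).
Local Notation x0 := (@pone dd T).

Definition pat n (phi : smap T n) : {ffun 'I_(size F) -> ppd n} :=
  [ffun i : 'I_(size F) => phi (nth x0 F i)].

Lemma dist_le_distF n (phi psi : smap T n) s : s \in F ->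
  ppd_dist R (phi s) (psi s) <= distF R F phi psi.
Proof.
move=> hs; rewrite /distF.
exact: (le_bigmax_seq (r:=F) 0 s xpredT (fun s => ppd_dist R (phi s) (psi s)) hs).
Qed.

Lemma ppd_dist0 n (q : ppd n) : ppd_dist R q q = 0.
Proof.
rewrite /ppd_dist card_cl.
have -> : #|dset q q| = 0%N by apply: eq_card0 => i; rewrite !inE eqxx.
by rewrite mul0r.
Qed.

Lemma distF_le0 n (phi psi : smap T n) : (forall s, s \in F -> phi s = psi s) ->
  distF R F phi psi <= 0.
Proof.
move=> h; rewrite /distF big_seq; apply: bigmax_le => // s hs.
by rewrite h // ppd_dist0.
Qed.

Lemma covers_mono n (S : set (smap T n)) eps k : 0 <= eps ->
  covers mu E F S 0 k -> covers mu E F S eps k.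
Proof.
move=> e0 [c [sz [cs cov]]]; exists c; split => //; split => // phi /cov [psi pc h].
by exists psi => //; apply: le_trans e0.
Qed.

Lemma Ncov_ge0 n (S : set (smap T n)) eps : (0 <= Ncov mu E F S eps)%E.
Proof. by apply: le_ereal_inf_tmp => _ [k _ <-]; rewrite lee_fin ler0n. Qed.

Lemma Ncov_mono n (S : set (smap T n)) eps : 0 <= eps ->
  (Ncov mu E F S eps <= Ncov mu E F S 0)%E.
Proof.
move=> e0; apply: le_ereal_inf => _ [k hk <-]; exists k => //.
exact: covers_mono.
Qed.

Definition rep n (S : set (smap T n)) (psi : smap T n)
    (t : {ffun 'I_(size F) -> ppd n}) : smap T n :=
  match pselect (exists phi, S phi /\ pat phi = t) with
  | left e => projT1 (cid e)
  | right _ => psi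
  end.

Lemma rep_spec n (S : set (smap T n)) psi t :
  (exists phi, S phi /\ pat phi = t) -> S (rep S psi t) /\ pat (rep S psi t) = t.
Proof. by rewrite /rep; case: pselect => // e _; exact: projT2 (cid e). Qed.

Lemma rep_smap n (S : set (smap T n)) psi t :
  (forall phi, S phi -> is_smap mu E phi) -> is_smap mu E psi ->
  is_smap mu E (rep S psi t).
Proof.
move=> hS hpsi; rewrite /rep; case: pselect => // e.
by apply: hS; case: (projT2 (cid e)).
Qed.

Definition Mb n (eps : R) : nat :=
  ((n * n.+1).+1 ^ Num.truncn (eps * n%:R)) ^ size F.

Lemma covers_bound n (S : set (smap T n)) eps K :
  (forall phi, S phi -> is_smap mu E phi) ->
  covers mu E F S eps K -> exists k, (k <= K * Mb n eps)%N /\ covers mu E F S 0 k.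
Proof.
move=> hS [c [szc [cs cov]]].
pose Bs (psi : smap T n) := [set t : {ffun 'I_(size F) -> ppd n} |
   [forall i, ppd_dist R (t i) (psi (nth x0 F i)) <= eps]]%SET.
pose c0 := flatten [seq [seq rep S psi t | t <- enum (Bs psi)] | psi <- c].
have cardBs : forall psi, (#|Bs psi| <= Mb n eps)%N.
  move=> psi; rewrite /Mb; apply: (@card_B _ _ _ (fun i : 'I_(size F) => psi (nth x0 F i))) => t.
  rewrite inE => /forallP ht i; apply: (@ppd_dist_card R); exact: ht.
exists (size c0); split.
  rewrite -szc /c0; elim: (c) => //= psi c' IH.
  by rewrite size_cat size_map -cardE mulSn leq_add.
exists c0; split => //; split.
  move=> x /flattenP [xs /mapP [psi psic ->]] /mapP [t _ ->].
  by apply: rep_smap => //; exact: cs.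
move=> phi Sphi; have [psi psic dle] := cov phi Sphi.
have tB : pat phi \in Bs psi.
  rewrite inE; apply/forallP => i; rewrite ffunE.
  by apply: le_trans (dist_le_distF _ _ _) dle; exact: mem_nth.
exists (rep S psi (pat phi)).
  apply/flattenP; exists [seq rep S psi t | t <- enum (Bs psi)].
    by apply/mapP; exists psi.
  by apply/mapP; exists (pat phi); rewrite ?mem_enum.
have [_ hp] := rep_spec psi (ex_intro _ phi (conj Sphi erefl)).
apply: distF_le0 => s sF.
have si : (index s F < size F)%N by rewrite index_mem.
have := congr1 (fun f : {ffun _ -> _} => f (Ordinal si)) hp.
by rewrite /pat !ffunE /= nth_index.
Qed.

End Comb.


Section Log.
Variable R : realType.
Local Open Scope ereal_scope.

Lemma elog_mono (x y : \bar R) : 0 <= x -> x <= y -> elog x <= elog y.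
Proof.
case: x => [r| |] //; case: y => [s| |] // r0 rs.
- rewrite lee_fin in r0; rewrite lee_fin in rs; rewrite /elog.
  have [r00|r0'] := eqVneq r 0%R; first by rewrite leNye.
  have rp : (0 < r)%R by rewrite lt_def r0' r0.
  have sp : (0 < s)%R by apply: lt_le_trans rs.
  by rewrite gt_eqF // lee_fin ler_ln // inE.
- by rewrite /elog; case: eqVneq => _; rewrite ?leey ?leNye.
Qed.

Lemma elog_mul (x : \bar R) (M : R) : 0 <= x -> (0 < M)%R ->
  elog (x * M%:E) = elog x + (ln M)%:E.
Proof.
case: x => [r| |] // r0 M0.
- rewrite lee_fin in r0; rewrite -EFinM /elog.
  have [->|r0'] := eqVneq r 0%R; first by rewrite mul0r eqxx.
  have rp : (0 < r)%R by rewrite lt_def r0' r0.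
  by rewrite mulf_eq0 (negbTE r0') gt_eqF //= lnM // -EFinD.
- by rewrite gt0_mulye ?lte_fin.
Qed.

End Log.

Section Sterm.
Variables (R : realType) (dd : measure_display) (T : measurableType dd).
Variables (mu : probability T R) (E : T -> T -> Prop) (F : seq (parmap T)).

Lemma SA_smap m delta n (phi : smap T n) : SA mu E F m delta phi -> is_smap mu E phi.
Proof. by case. Qed.

Lemma Ncov_bound n (S : set (smap T n)) eps :
  (forall phi, S phi -> is_smap mu E phi) ->
  (Ncov mu E F S 0 <= Ncov mu E F S eps * ((Mb F n eps)%:R)%:E)%E.
Proof.
move=> hS.
set M := Mb F n eps.
have M0 : (0 < M%:R :> R) by rewrite ltr0n /M /Mb !expn_gt0.
have h : forall K, covers mu E F S eps K -> (Ncov mu E F S 0 <= (K * M)%:R%:E)%E.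
  move=> K /(covers_bound hS) [k [kle kc]].
  apply: le_trans (_ : (k%:R%:E <= _)%E); first by apply: ereal_inf_lbound; exists k.
  by rewrite lee_fin ler_nat.
have h2 : (Ncov mu E F S 0 * (M%:R^-1)%:E <= Ncov mu E F S eps)%E.
  apply: le_ereal_inf_tmp => _ [K hK <-].
  have := lee_wpmul2r (_ : (0 <= (M%:R^-1)%:E)%E) (h K hK).
  rewrite -EFinM natrM mulrK; last by rewrite unitfE gt_eqF.
  by apply; rewrite lee_fin invr_ge0 ltW.
have := lee_wpmul2r (_ : (0 <= (M%:R)%:E)%E) h2.
rewrite -muleA -EFinM mulVf ?gt_eqF // mule1; apply.
by rewrite lee_fin ltW.
Qed.

Lemma fac_ge0 (n : nat) : (0 <= (n%:R * ln (n%:R : R))^-1)%R.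
Proof.
rewrite invr_ge0; case: n => [|n]; first by rewrite mul0r.
by apply: mulr_ge0; [rewrite ler0n | apply: ln_ge0; rewrite ler1n].
Qed.

Lemma sterm_mono m delta eps n : (0 <= eps)%R ->
  (sterm mu E F m delta eps n <= sterm mu E F m delta 0 n)%E.
Proof.
move=> e0; rewrite /sterm; apply: lee_wpmul2l; first by rewrite lee_fin fac_ge0.
apply: elog_mono; first exact: Ncov_ge0.
exact: Ncov_mono.
Qed.

Lemma sterm_bound m delta eps n : (0 < eps)%R ->
  (sterm mu E F m delta 0 n <=
   sterm mu E F m delta eps n + ((3 * (size F)%:R) * eps)%:E)%E.
Proof.
move=> e0; rewrite /sterm.
have Ce : (0 <= 3 * (size F)%:R * eps)%R by rewrite !mulr_ge0 // ?ler0n // ltW.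
case: (ltnP n 2) => n2.
  have -> : (n%:R * ln (n%:R : R))^-1 = 0.
    by case: n n2 => [|[|]] //= _; rewrite ?mul0r ?ln1 ?mulr0 invr0.
  by rewrite !mul0e add0e lee_fin.
set f := (n%:R * ln (n%:R : R))^-1.
have lnn : (0 < ln (n%:R : R))%R by apply: ln_gt0; rewrite ltr1n.
have n0 : (0 < n%:R :> R)%R by rewrite ltr0n; apply: leq_trans n2.
have P0 : (0 < n%:R * ln (n%:R : R))%R by apply: mulr_gt0.
have f0 : (0 < f)%R by rewrite invr_gt0.
set S := SA mu E F m delta (n := n).
set M := Mb F n eps.
have M0 : (0 < M%:R :> R) by rewrite ltr0n /M /Mb !expn_gt0.
apply: le_trans (_ : (f%:E * elog (Ncov mu E F S eps * (M%:R)%:E) <= _)%E).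
  apply: lee_wpmul2l; first by rewrite lee_fin ltW.
  apply: elog_mono; first exact: Ncov_ge0.
  by apply: Ncov_bound => phi; exact: SA_smap.
rewrite elog_mul //; last exact: Ncov_ge0.
rewrite muleDr //; last exact: fin_num_adde_defl.
rewrite leeD2l // -EFinM lee_fin.
set L := Num.truncn (eps * n%:R).
have LE : (L%:R <= eps * n%:R :> R)%R by rewrite truncn_le mulr_ge0 // ltW.
have lnM : ln (M%:R : R) = (L * size F)%:R * ln (((n * n.+1).+1)%:R : R).
  by rewrite /M /Mb -expnM natrX lnXn ?ltr0n // mulr_natl.
have la : (ln (((n * n.+1).+1)%:R : R) <= 3%:R * ln (n%:R : R))%R.
  rewrite mulr_natl -lnXn // -natrX ler_ln ?inE ?ltr0n ?expn_gt0 ?n0 //.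
    by rewrite ler_nat; nia.
    by rewrite posrE ltr0n.
  by rewrite posrE ltr0n expn_gt0; lia.
rewrite (_ : f * ln M%:R = f * ((L * size F)%:R * ln (((n * n.+1).+1)%:R : R)));
  last by congr (_ * _); exact: lnM.
rewrite /f ler_pdivrMl // natrM.
have la0 : (0 <= ln (((n * n.+1).+1)%:R : R))%R by apply: ln_ge0; rewrite ler1n.
apply: le_trans (_ : (eps * n%:R * (size F)%:R * (3%:R * ln (n%:R : R)) <= _)%R).
  have sF0 : (0 <= (size F)%:R :> R)%R by rewrite ler0n.
  apply: ler_pM => //.
  by apply: ler_pM => //; rewrite ler0n.
by rewrite le_eqVlt; apply/orP; left; apply/eqP; ring.
Qed.

End Sterm.

Section Main.
Variables (R : realType) (dd : measure_display) (T : measurableType dd).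
Variables (mu : probability T R) (E : T -> T -> Prop) (F : seq (parmap T)).

Lemma agg_main (A : (nat -> \bar R) -> \bar R) :
  (forall (u v : nat -> \bar R) (c : R), (forall n, (u n <= v n)%E) ->
     (forall n, (v n <= u n + c%:E)%E) -> (A u <= A v)%E /\ (A v <= A u + c%:E)%E) ->
  ereal_inf [set ereal_inf [set A (sterm mu E F m delta eps)
                           | delta in [set delta : R | 0 < delta]]
            | m in [set: nat]] @[eps --> 0^'+] -->
  ereal_inf [set ereal_inf [set A (sterm mu E F m delta 0)
                           | delta in [set delta : R | 0 < delta]]
            | m in [set: nat]].
Proof.
move=> hA.
have C0 : (0 <= 3 * (size F)%:R :> R) by rewrite mulr_ge0 // ler0n.
apply: (sandwich_cvg C0) => eps e0.
have key : forall m delta, (A (sterm mu E F m delta eps) <= A (sterm mu E F m delta 0))%E /\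
    (A (sterm mu E F m delta 0) <= A (sterm mu E F m delta eps) + (3 * (size F)%:R * eps)%:E)%E.
  move=> m delta; apply: hA => n; [exact: sterm_mono (ltW e0) | exact: sterm_bound].
have inner : forall m,
  (ereal_inf [set A (sterm mu E F m delta eps) | delta in [set delta : R | (0 < delta)%R]] <=
   ereal_inf [set A (sterm mu E F m delta 0) | delta in [set delta : R | (0 < delta)%R]])%E /\
  (ereal_inf [set A (sterm mu E F m delta 0) | delta in [set delta : R | (0 < delta)%R]] <=
   ereal_inf [set A (sterm mu E F m delta eps) | delta in [set delta : R | (0 < delta)%R]]
   + (3 * (size F)%:R * eps)%:E)%E.
  move=> m; apply: inf_shift => delta; [exact: (key m delta).1 | exact: (key m delta).2].
apply: inf_shift => m; [exact: (inner m).1 | exact: (inner m).2].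
Qed.

End Main.

Unset Implicit Arguments.

Theorem mainTheorem10 (R : realType) (d : measure_display) (T : measurableType d)
  (mu : probability T R) (E : T -> T -> Prop)
  (hT : std_borel R T) (hE : cber E) (hpmp : pmp mu E)
  (F : seq (parmap T)) (hF : forall s, s \in F -> in_pgrp mu E s) :
  s_eps mu E F eps @[eps --> 0^'+] --> s_ent mu E F /\
  lower_s_eps mu E F eps @[eps --> 0^'+] --> lower_s_ent mu E F /\
  (forall om : set_system nat, UltraFilter om -> nonprincipal om ->
     s_omega_eps mu E om F eps @[eps --> 0^'+] --> s_omega_ent mu E om F).
Proof.
split; first exact: (@agg_main R d T mu E F (@limn_esup R) (@limsup_shift R)).
split; first exact: (@agg_main R d T mu E F (@limn_einf R) (@liminf_shift R)).
move=> om U _.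
exact: (@agg_main R d T mu E F (fun u => lim (u @ om)) (@ultra_shift R om U)).
Qed.
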